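(* Let $X$ be a normed linear space, $F:X\rightrightarrows\mathbb{R}^p$, $(x,y)\in\mathrm{gph}F$, with $F$ Lipschitz around $x$ and $y\in\mathcal{PE}(F(x),P)$. If $S$ is a nonempty compact subset of $X\times\mathbb{R}^p$, then the set $\mathrm{cl}\Big(\bigcup_{(v,w)\in S}\big(w+D_\uparrow F((x,y);v)\big)\Big)$ is $P$-bounded.
   Context: $P\subset\mathbb{R}^p$ is a closed convex pointed cone containing $0$ with nonempty interior; $F_\uparrow(x)=F(x)+P$. $\mathcal{E}(S,P)=\{y\in S:(y-P)\cap S=\{y\}\}$; contingent cone $T_S(z)=\{v:\exists h_k\to0^+,\exists v_k\to v,z+h_kv_k\in S\}$; $\mathcal{PE}(S,P)=\{y\in\mathcal{E}(S,P):T_{S+P}(y)\cap(-P)=\{0\}\}$. $F$ is Lipschitz around $x$ if there are $l>0$ and a neighborhood $\mathcal{O}$ of $x$ with $F(x_1)\subset F(x_2)+l\|x_1-x_2\|\mathbf{B}$ for $x_1,x_2\in\mathcal{O}$. Contingent derivative $DF(x,y)$: graph $T_{\mathrm{gph}F}(x,y)$, value at $v$ written $DF((x,y);v)$. Generalized contingent epiderivative: $D_\uparrow F((x,y);v)=\mathcal{E}(DF_\uparrow((x,y);v),P)$ (empty if $DF_\uparrow((x,y);v)$ is empty or has no minimal element). Recession cone $A^+=\{z:\exists h_k\to0^+,\exists y_k\in A,h_ky_k\to z\}$; $A$ is $P$-bounded if $A^+\cap(-P)=\{0\}$. *)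

(* Defs.v *)
From Stdlib Require Import Reals.
From mathcomp Require Import ssreflect ssrfun ssrbool eqtype ssrnat seq fintype bigop.
Set Implicit Arguments.
Unset Strict Implicit.
Open Scope R_scope.

Record NSpace := mkNS {
  ns_car :> Type;
  ns_add : ns_car -> ns_car -> ns_car;
  ns_opp : ns_car -> ns_car;
  ns_zero : ns_car;
  ns_scal : R -> ns_car -> ns_car;
  ns_norm : ns_car -> R }.
Arguments ns_add {_}. Arguments ns_opp {_}. Arguments ns_zero {_}.
Arguments ns_scal {_}. Arguments ns_norm {_}.

Definition ns_sub {X : NSpace} (a b : X) : X := ns_add a (ns_opp b).

Definition normed_space (X : NSpace) : Prop :=
  (forall a b c : X, ns_add a (ns_add b c) = ns_add (ns_add a b) c) /\
  (forall a b : X, ns_add a b = ns_add b a) /\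
  (forall a : X, ns_add a ns_zero = a) /\
  (forall a : X, ns_add a (ns_opp a) = ns_zero) /\
  (forall a : X, ns_scal 1 a = a) /\
  (forall (s t : R) (a : X), ns_scal s (ns_scal t a) = ns_scal (s * t) a) /\
  (forall (s t : R) (a : X), ns_scal (s + t) a = ns_add (ns_scal s a) (ns_scal t a)) /\
  (forall (s : R) (a b : X), ns_scal s (ns_add a b) = ns_add (ns_scal s a) (ns_scal s b)) /\
  (forall a : X, ns_norm a = 0 -> a = ns_zero) /\
  (forall (s : R) (a : X), ns_norm (ns_scal s a) = Rabs s * ns_norm a) /\
  (forall a b : X, ns_norm (ns_add a b) <= ns_norm a + ns_norm b).

Definition Rp (p : nat) : NSpace :=
  @mkNS ('I_p -> R)
    (fun u v i => u i + v i)
    (fun u i => - u i)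
    (fun _ => 0)
    (fun s u i => s * u i)
    (fun u => sqrt (\big[Rplus/0]_(i < p) (u i * u i))).

(* Product space X x Y with the sum norm (any product norm gives the same notions). *)
Definition prodNS (X Y : NSpace) : NSpace :=
  @mkNS (X * Y)%type
    (fun a b => (ns_add a.1 b.1, ns_add a.2 b.2))
    (fun a => (ns_opp a.1, ns_opp a.2))
    (ns_zero, ns_zero)
    (fun s a => (ns_scal s a.1, ns_scal s a.2))
    (fun a => ns_norm a.1 + ns_norm a.2).

Definition seq_conv {X : NSpace} (u : nat -> X) (l : X) : Prop :=
  forall eps, 0 < eps -> exists N, forall n, (N <= n)%nat -> ns_norm (ns_sub (u n) l) < eps.

Definition rseq_to0plus (h : nat -> R) : Prop :=
  (forall k, 0 < h k) /\ Un_cv h 0.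

(* cl_set (sequential, = topological cl_set in a normed space) *)
Definition cl_set {X : NSpace} (A : X -> Prop) : X -> Prop :=
  fun z => exists u : nat -> X, (forall n, A (u n)) /\ seq_conv u z.

(* compactness (sequential, = compactness in a normed space) *)
Definition seq_compact {X : NSpace} (S : X -> Prop) : Prop :=
  forall u : nat -> X, (forall n, S (u n)) ->
  exists (phi : nat -> nat) (l : X),
    (forall n, (phi n < phi n.+1)%nat) /\ S l /\ seq_conv (fun n => u (phi n)) l.

Definition contingent_cone {X : NSpace} (S : X -> Prop) (z : X) : X -> Prop :=
  fun v => exists (h : nat -> R) (vk : nat -> X),
    rseq_to0plus h /\ seq_conv vk v /\
    forall k, S (ns_add z (ns_scal (h k) (vk k))).

Definition recession_cone {X : NSpace} (A : X -> Prop) : X -> Prop :=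
  fun z => exists (h : nat -> R) (yk : nat -> X),
    rseq_to0plus h /\ (forall k, A (yk k)) /\
    seq_conv (fun k => ns_scal (h k) (yk k)) z.

Definition good_cone {p : nat} (P : Rp p -> Prop) : Prop :=
  P ns_zero /\
  (forall z, cl_set P z -> P z) /\
  (forall (s : R) y, 0 <= s -> P y -> P (ns_scal s y)) /\
  (forall y1 y2, P y1 -> P y2 -> P (ns_add y1 y2)) /\
  (forall y, P y -> P (ns_opp y) -> y = ns_zero) /\
  (exists y0 r, 0 < r /\ forall y, ns_norm (ns_sub y y0) < r -> P y).

Definition minimal_pts {p : nat} (S P : Rp p -> Prop) : Rp p -> Prop :=
  fun y => S y /\
    forall z, ((exists q, P q /\ z = ns_sub y q) /\ S z) <-> z = y.

Definition set_plus {p : nat} (S P : Rp p -> Prop) : Rp p -> Prop :=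
  fun z => exists s q, S s /\ P q /\ z = ns_add s q.

Definition proper_minimal_pts {p : nat} (S P : Rp p -> Prop) : Rp p -> Prop :=
  fun y => minimal_pts S P y /\
    forall v, (contingent_cone (set_plus S P) y v /\ P (ns_opp v)) <-> v = ns_zero.

Definition graph {X : NSpace} {p : nat} (F : X -> Rp p -> Prop) : prodNS X (Rp p) -> Prop :=
  fun a => F a.1 a.2.

Definition lipschitz_around {X : NSpace} {p : nat} (F : X -> Rp p -> Prop) (x : X) : Prop :=
  exists l delta, 0 < l /\ 0 < delta /\
    forall x1 x2 : X, ns_norm (ns_sub x1 x) < delta -> ns_norm (ns_sub x2 x) < delta ->
      forall y1, F x1 y1 -> exists y2, F x2 y2 /\
        ns_norm (ns_sub y1 y2) <= l * ns_norm (ns_sub x1 x2).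

Definition epi_map {X : NSpace} {p : nat} (F : X -> Rp p -> Prop) (P : Rp p -> Prop)
  : X -> Rp p -> Prop := fun x => set_plus (F x) P.

Definition cont_deriv {X : NSpace} {p : nat} (F : X -> Rp p -> Prop) (x : X) (y : Rp p)
  (v : X) : Rp p -> Prop :=
  fun w => contingent_cone (graph F) (x, y) (v, w).

(* generalized contingent epiderivative D_↑F((x,y); v) = E(DF_↑((x,y);v), P) *)
Definition gen_cont_epideriv {X : NSpace} {p : nat} (F : X -> Rp p -> Prop)
  (P : Rp p -> Prop) (x : X) (y : Rp p) (v : X) : Rp p -> Prop :=
  minimal_pts (cont_deriv (epi_map F P) x y v) P.

Definition P_bounded {p : nat} (P A : Rp p -> Prop) : Prop :=
  forall z, (recession_cone A z /\ P (ns_opp z)) <-> z = ns_zero.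

(* Main.v *)
Require Import Defs.
From Stdlib Require Import Reals Lra Rtopology Classical ClassicalEpsilon FunctionalExtensionality.
From mathcomp Require Import ssreflect ssrfun ssrbool eqtype ssrnat seq fintype bigop.
Open Scope R_scope.
Set Implicit Arguments.
Unset Strict Implicit.
From HB Require Import structures.

Lemma RplusA' : associative Rplus.
Proof. move=> a b c; ring. Qed.
HB.instance Definition _ := Monoid.isComLaw.Build R 0 Rplus RplusA' Rplus_comm Rplus_0_l.

Lemma choice_fn (A B : Type) (Rl : A -> B -> Prop) :
  (forall a, exists b, Rl a b) -> exists f : A -> B, forall a, Rl a (f a).
Proof.
move=> H; exists (fun a => proj1_sig (constructive_indefinite_description _ (H a))).
move=> a; exact: proj2_sig (constructive_indefinite_description _ (H a)).
Qed.

Lemma sum_le (n : nat) (f g : 'I_n -> R) : (forall i, f i <= g i) ->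
  \big[Rplus/0]_(i<n) f i <= \big[Rplus/0]_(i<n) g i.
Proof.
move=> H; apply: (big_ind2 (fun a b => a <= b)); [lra| move=> *; lra| move=> i _; exact: H].
Qed.

Lemma sum_ge0 (n : nat) (f : 'I_n -> R) : (forall i, 0 <= f i) ->
  0 <= \big[Rplus/0]_(i<n) f i.
Proof.
move=> H; apply: (big_ind (fun a => 0 <= a)); [lra| move=> *; lra| move=> i _; exact: H].
Qed.

Lemma sum_const (n : nat) (c : R) : \big[Rplus/0]_(i<n) c = INR n * c.
Proof.
elim: n => [|n IH]; first by rewrite big_ord0 /=; ring.
rewrite big_ord_recr S_INR /= IH; ring.
Qed.

Section RpFacts.
Variable p : nat.
Definition Nrm (u : Rp p) : R := ns_norm u.
Definition N1 (u : Rp p) : R := \big[Rplus/0]_(i < p) Rabs (u i).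
Definition Kc : R := INR p + 1.

Lemma Kc_pos : 0 < Kc.
Proof. rewrite /Kc; have := pos_INR p; lra. Qed.

Lemma Nrm_ge0 u : 0 <= Nrm u.
Proof. exact: sqrt_pos. Qed.

Lemma coord_le u i : Rabs (u i) <= Nrm u.
Proof.
rewrite /Nrm /= -sqrt_Rsqr_abs; apply: sqrt_le_1_alt.
rewrite (bigD1 i) //= /Rsqr.
rewrite -[X in X <= _]Rplus_0_r; apply: Rplus_le_compat_l.
apply: (big_ind (fun a => 0 <= a)); [lra| move=> *; lra| move=> j _; nra].
Qed.

Lemma Nrm_le_N1 u : Nrm u <= N1 u.
Proof.
have [H1 H2] : 0 <= N1 u /\ \big[Rplus/0]_(i<p) (u i * u i) <= N1 u * N1 u.
  rewrite /N1; apply: (big_ind2 (fun a b => 0 <= b /\ a <= b * b)).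
  - lra.
  - move=> a1 b1 a2 b2 [? ?] [? ?]; split; nra.
  - move=> i _; split; first exact: Rabs_pos.
    rewrite -Rabs_mult Rabs_right; [lra| nra].
rewrite /Nrm /=; rewrite -(sqrt_square (N1 u)) //; exact: sqrt_le_1_alt.
Qed.

Lemma N1_le u : N1 u <= INR p * Nrm u.
Proof.
rewrite -sum_const; apply: sum_le => i; exact: coord_le.
Qed.

Lemma N1_triang (u v : Rp p) : N1 (ns_add u v) <= N1 u + N1 v.
Proof.
rewrite /N1 -big_split /=; apply: sum_le => i; exact: Rabs_triang.
Qed.

Lemma Nrm_triang (u v : Rp p) : Nrm (ns_add u v) <= Kc * (Nrm u + Nrm v).
Proof.
have := Nrm_le_N1 (ns_add u v); have := N1_triang u v; have := N1_le u; have := N1_le v.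
have := Nrm_ge0 u; have := Nrm_ge0 v; rewrite /Kc; nra.
Qed.

Lemma Rp_ext (u v : Rp p) : (forall i, u i = v i) -> u = v.
Proof. move=> H; exact: functional_extensionality. Qed.

Lemma Nrm0_eq (u : Rp p) : Nrm u = 0 -> u = ns_zero.
Proof.
move=> H; apply: Rp_ext => i /=; have := coord_le u i; rewrite H => h.
have := Rabs_pos (u i); move=> h2; have := Rle_abs (u i); have := Rle_abs (- u i); rewrite Rabs_Ropp; lra.
Qed.
End RpFacts.

Lemma inv_small eps : 0 < eps -> exists N, forall n, (N <= n)%N -> / (INR n + 1) < eps.
Proof.
move=> he; have [N [HN HN0]] := archimed_cor1 eps he.
exists N => n /leP Hn.
have h1 : 0 < INR N by apply: lt_0_INR.
have h2 : INR N <= INR n by apply: le_INR.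
apply: Rle_lt_trans HN; apply: Rinv_le_contravar; lra.
Qed.

Lemma Un_cv_iff (u : nat -> R) l : Un_cv u l <->
  forall eps, 0 < eps -> exists N, forall n, (N <= n)%N -> Rabs (u n - l) < eps.
Proof.
split=> H eps he; have [N HN] := H eps he; exists N => n Hn; apply: HN.
- by apply/leP.
- by apply/leP.
Qed.

Lemma incr_ge (phi : nat -> nat) : (forall n, (phi n < phi n.+1)%N) -> forall n, (n <= phi n)%N.
Proof.
move=> H; elim=> [|n IH] //; apply: leq_ltn_trans IH (H n).
Qed.

Lemma incr_mono (phi : nat -> nat) : (forall n, (phi n < phi n.+1)%N) ->
  forall n m, (n <= m)%N -> (phi n <= phi m)%N.
Proof.
move=> H n m /subnK <-; elim: (m - n)%N => [|k IH] //.
rewrite addSn; apply: leq_trans IH (ltnW (H _)).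
Qed.

Lemma incr_comp (phi psi : nat -> nat) : (forall n, (phi n < phi n.+1)%N) ->
  (forall n, (psi n < psi n.+1)%N) -> forall n, (phi (psi n) < phi (psi n.+1))%N.
Proof.
move=> H1 H2 n; have := incr_mono H1 (H2 n); apply: leq_trans; exact: H1.
Qed.

Lemma conv_subseq (Y : NSpace) (u : nat -> Y) l phi : seq_conv u l ->
  (forall n, (phi n < phi n.+1)%N) -> seq_conv (fun n => u (phi n)) l.
Proof.
move=> H Hp eps he; have [N HN] := H eps he; exists N => n Hn; apply: HN.
exact: leq_trans Hn (incr_ge Hp n).
Qed.

Lemma Un_cv_subseq (u : nat -> R) l phi : Un_cv u l ->
  (forall n, (phi n < phi n.+1)%N) -> Un_cv (fun n => u (phi n)) l.
Proof.
move=> /Un_cv_iff H Hp; apply/Un_cv_iff => eps he; have [N HN] := H eps he; exists N => n Hn; apply: HN.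
exact: leq_trans Hn (incr_ge Hp n).
Qed.

Lemma BW_R (a : nat -> R) M : (forall n, Rabs (a n) <= M) ->
  exists phi : nat -> nat, exists l, (forall n, (phi n < phi n.+1)%N) /\ Un_cv (fun n => a (phi n)) l.
Proof.
move=> HM.
have HX : forall n, (fun c => - M <= c <= M) (a n).
  move=> n /=; have := HM n; have := Rle_abs (a n); have := Rle_abs (- a n); rewrite Rabs_Ropp; lra.
have [l Hl] := Bolzano_Weierstrass a _ (compact_P3 (-M) M) HX.
have Hg : forall Nk : nat * nat, exists m, (Nk.1 <= m)%N /\ Rabs (a m - l) < / (INR Nk.2 + 1).
  move=> [N k] /=; have hpos : 0 < / (INR k + 1).
    apply: Rinv_0_lt_compat; have := pos_INR k; lra.
  have [m [Hm Hv]] := Hl (disc l (mkposreal _ hpos)) N (ex_intro _ (mkposreal _ hpos) (fun y h => h)).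
  exists m; split; [by apply/leP | exact Hv].
have [g Hg'] := choice_fn Hg.
pose phi := fix f (n : nat) : nat := if n is n'.+1 then g ((f n').+1, n) else g (0%N, 0%N).
have Hphi : forall n, (phi n < phi n.+1)%N /\ Rabs (a (phi n) - l) < / (INR n + 1).
  case=> [|n]; split; rewrite /=.
  - exact: (proj1 (Hg' ((g (0,0)).+1, 1)%N)).
  - exact: (proj2 (Hg' (0,0)%N)).
  - exact: (proj1 (Hg' ((phi n.+1).+1, n.+2))).
  - exact: (proj2 (Hg' ((phi n).+1, n.+1))).
exists phi, l; split; first by move=> n; case: (Hphi n).
apply/Un_cv_iff => eps he; have [N HN] := inv_small he; exists N => n Hn.
have [_ h] := Hphi n; have := HN n Hn; lra.
Qed.

Section RpConv.
Variable p : nat.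
Implicit Types u v : nat -> Rp p.

Lemma conv_coord u (l : Rp p) :
  seq_conv u l <-> forall i, Un_cv (fun n => u n i) (l i).
Proof.
split.
- move=> H i; apply/Un_cv_iff => eps he; have [N HN] := H eps he; exists N => n Hn.
  move: (coord_le (ns_sub (u n) l) i) (HN n Hn); rewrite /Nrm /=.
  rewrite /Rminus; lra.
- move=> H eps he.
  have he' : 0 < eps / Kc p by apply: Rdiv_lt_0_compat => //; exact: Kc_pos.
  have [Nf HNf] := choice_fn (fun i => proj1 (Un_cv_iff _ _) (H i) _ he').
  exists (\max_(i < p) Nf i) => n Hn.
  apply: Rle_lt_trans (Nrm_le_N1 _) _.
  apply: (@Rle_lt_trans _ (INR p * (eps / Kc p))).
    rewrite -sum_const; apply: sum_le => i; apply: Rlt_le; apply: HNf.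
    exact: leq_trans (leq_bigmax i) Hn.
  have -> : INR p * (eps / Kc p) = eps - eps / Kc p.
    rewrite /Kc; field; have := pos_INR p; lra.
  lra.
Qed.

Lemma conv_add u v a b : seq_conv u a -> seq_conv v b ->
  seq_conv (fun n => ns_add (u n) (v n)) (ns_add a b).
Proof.
move=> /conv_coord H1 /conv_coord H2; apply/conv_coord => i /=.
exact: CV_plus (H1 i) (H2 i).
Qed.

Lemma conv_opp u a : seq_conv u a -> seq_conv (fun n => ns_opp (u n)) (ns_opp a).
Proof.
move=> /conv_coord H1; apply/conv_coord => i /=; exact: CV_opp (H1 i).
Qed.

Lemma conv_sub u v a b : seq_conv u a -> seq_conv v b ->
  seq_conv (fun n => ns_sub (u n) (v n)) (ns_sub a b).
Proof. move=> H1 H2; apply: conv_add H1 (conv_opp H2). Qed.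

Lemma conv_scal (s : nat -> R) c u a : Un_cv s c -> seq_conv u a ->
  seq_conv (fun n => ns_scal (s n) (u n)) (ns_scal c a).
Proof.
move=> Hs /conv_coord H1; apply/conv_coord => i /=; exact: CV_mult Hs (H1 i).
Qed.

Lemma conv_const (a : Rp p) : seq_conv (fun _ => a) a.
Proof.
apply/conv_coord => i; apply/Un_cv_iff => eps he; exists 0%N => n _.
rewrite Rminus_diag Rabs_R0; lra.
Qed.

Lemma conv_unique u a b : seq_conv u a -> seq_conv u b -> a = b.
Proof.
move=> /conv_coord H1 /conv_coord H2; apply: Rp_ext => i.
exact: UL_sequence (H1 i) (H2 i).
Qed.

Lemma conv_ext u v a : (forall n, u n = v n) -> seq_conv u a -> seq_conv v a.
Proof. move=> H H1 eps he; have [N HN] := H1 eps he; exists N => n Hn; rewrite -H; exact: HN. Qed.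

Lemma conv_small u (e : nat -> R) : (forall n, Nrm (u n) <= e n) -> Un_cv e 0 ->
  seq_conv u ns_zero.
Proof.
move=> H /Un_cv_iff He; apply/conv_coord => i; apply/Un_cv_iff => eps he.
have [N HN] := He eps he; exists N => n Hn.
have := HN n Hn; have := coord_le (u n) i; have := H n; rewrite /=.
move=> h1 h2 h3.
rewrite Rminus_0_r in h3; have -> : u n i - (ns_zero : Rp p) i = u n i by rewrite /=; ring.
have := Rle_abs (e n); lra.
Qed.

Lemma BW_Rp u M : (forall n, Nrm (u n) <= M) ->
  exists phi : nat -> nat, exists l, (forall n, (phi n < phi n.+1)%N) /\
    seq_conv (fun n => u (phi n)) l.
Proof.
move=> HM.
have Hk : forall k : nat, exists phi : nat -> nat, (forall n, (phi n < phi n.+1)%N) /\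
   forall i : 'I_p, (i < k)%N -> exists li, Un_cv (fun n => u (phi n) i) li.
  elim=> [|k [phi [Hphi IH]]].
    by exists id; split => // n.
  case: (ltnP k p) => Hkp; last first.
    exists phi; split=> // i _; apply: IH; exact: leq_trans (ltn_ord i) Hkp.
  have := @BW_R (fun n => u (phi n) (Ordinal Hkp)) M (fun n => Rle_trans _ _ _ (coord_le _ _) (HM _)).
  move=> [psi [l0 [Hpsi Hl0]]].
  exists (fun n => phi (psi n)); split; first exact: incr_comp.
  move=> i; rewrite ltnS leq_eqVlt => /orP [/eqP Hik| Hik].
    exists l0; have -> : i = Ordinal Hkp by apply: ord_inj.
    exact: Hl0.
  have [li Hli] := IH i Hik; exists li.
  exact: (@Un_cv_subseq (fun n => u (phi n) i)).
have [phi [Hphi Hl]] := Hk p.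
have [l Hl'] := choice_fn (fun i : 'I_p => Hl i (ltn_ord i)).
exists phi, l; split => //; apply/conv_coord; exact: Hl'.
Qed.

Lemma sub_zero (a : Rp p) : ns_sub a ns_zero = a.
Proof. apply: Rp_ext => i /=; ring. Qed.

End RpConv.

Section XFacts.
Variable X : NSpace.
Hypothesis HX : normed_space X.
Implicit Types a b c : X.

Lemma X_assoc a b c : ns_add a (ns_add b c) = ns_add (ns_add a b) c.
Proof. by case: HX. Qed.
Lemma X_comm a b : ns_add a b = ns_add b a.
Proof. by case: HX => _ []. Qed.
Lemma X_add0 a : ns_add a ns_zero = a.
Proof. by case: HX => _ [] _ []. Qed.
Lemma X_addN a : ns_add a (ns_opp a) = ns_zero.
Proof. by case: HX => _ [] _ [] _ []. Qed.
Lemma X_scal1 a : ns_scal 1 a = a.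
Proof. by case: HX => _ [] _ [] _ [] _ []. Qed.
Lemma X_scalA s t a : ns_scal s (ns_scal t a) = ns_scal (s * t) a.
Proof. by case: HX => _ [] _ [] _ [] _ [] _ []. Qed.
Lemma X_scalDl s t a : ns_scal (s + t) a = ns_add (ns_scal s a) (ns_scal t a).
Proof. by case: HX => _ [] _ [] _ [] _ [] _ [] _ []. Qed.
Lemma X_scalDr s a b : ns_scal s (ns_add a b) = ns_add (ns_scal s a) (ns_scal s b).
Proof. by case: HX => _ [] _ [] _ [] _ [] _ [] _ [] _ []. Qed.
Lemma X_normZ s a : ns_norm (ns_scal s a) = Rabs s * ns_norm a.
Proof. by case: HX => _ [] _ [] _ [] _ [] _ [] _ [] _ [] _ [] _ []. Qed.
Lemma X_triang a b : ns_norm (ns_add a b) <= ns_norm a + ns_norm b.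
Proof. by case: HX => _ [] _ [] _ [] _ [] _ [] _ [] _ [] _ [] _ [] _. Qed.

Lemma X_opp_unique a b : ns_add b a = ns_zero -> b = ns_opp a.
Proof.
move=> H; rewrite -(X_add0 b) -(X_addN a) X_assoc H X_comm X_add0 //.
Qed.

Lemma X_scal0 a : ns_scal 0 a = ns_zero.
Proof.
have H : ns_scal 0 a = ns_add (ns_scal 0 a) (ns_scal 0 a) by rewrite -X_scalDl Rplus_0_r.
by rewrite -(X_addN (ns_scal 0 a)) {2}H -X_assoc X_addN X_add0.
Qed.

Lemma X_scalm1 a : ns_scal (-1) a = ns_opp a.
Proof.
apply: X_opp_unique; rewrite -{2}(X_scal1 a) -X_scalDl.
have -> : -1 + 1 = 0 by ring.
exact: X_scal0.
Qed.

Lemma X_norm0 : ns_norm (@ns_zero X) = 0.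
Proof. by rewrite -(X_scal0 ns_zero) X_normZ Rabs_R0 Rmult_0_l. Qed.

Lemma X_normN a : ns_norm (ns_opp a) = ns_norm a.
Proof. by rewrite -X_scalm1 X_normZ Rabs_Ropp Rabs_R1 Rmult_1_l. Qed.

Lemma X_norm_ge0 a : 0 <= ns_norm a.
Proof.
have := X_triang a (ns_opp a); rewrite X_addN X_norm0 X_normN; lra.
Qed.

Lemma X_sub_self a : ns_sub a a = ns_zero.
Proof. exact: X_addN. Qed.

Lemma X_sub_chain a b c : ns_add (ns_sub a b) (ns_sub b c) = ns_sub a c.
Proof.
rewrite /ns_sub -X_assoc (X_assoc (ns_opp b)) (X_comm (ns_opp b)) X_addN.
by rewrite (X_comm ns_zero) X_add0.
Qed.

Lemma X_tri_sub a b c : ns_norm (ns_sub a c) <= ns_norm (ns_sub a b) + ns_norm (ns_sub b c).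
Proof. rewrite -(X_sub_chain a b c); exact: X_triang. Qed.

Lemma X_norm_le a b : ns_norm a <= ns_norm (ns_sub a b) + ns_norm b.
Proof.
have E : ns_add (ns_sub a b) b = a.
  by rewrite /ns_sub -X_assoc (X_comm (ns_opp b)) X_addN X_add0.
rewrite -{1}E; exact: X_triang.
Qed.

Lemma X_sub_xhv (x : X) h (v : X) : ns_sub (ns_add x (ns_scal h v)) x = ns_scal h v.
Proof.
rewrite /ns_sub (X_comm x) -X_assoc X_addN X_add0 //.
Qed.

Lemma X_sub_x_xhv (x : X) h (v : X) : ns_sub x (ns_add x (ns_scal h v)) = ns_scal (- h) v.
Proof.
rewrite /ns_sub -X_scalm1 X_scalDr X_scalA X_scalm1 X_assoc X_addN.
by rewrite X_comm X_add0; congr ns_scal; ring.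
Qed.

End XFacts.

Lemma Nrm_scal p s (a : Rp p) : Nrm (ns_scal s a) = Rabs s * Nrm a.
Proof.
rewrite /Nrm /=.
have -> : \big[Rplus/0]_(i < p) (s * a i * (s * a i)) = (s * s) * \big[Rplus/0]_(i < p) (a i * a i).
  apply: (big_ind2 (fun u v => u = s * s * v)); [ring| move=> ? ? ? ? -> ->; ring| move=> i _; ring].
rewrite sqrt_mult; [|nra|].
  by rewrite -/(Rsqr s) sqrt_Rsqr_abs.
apply: sum_ge0 => i; nra.
Qed.

Lemma Nrm_opp p (a : Rp p) : Nrm (ns_opp a) = Nrm a.
Proof.
rewrite /Nrm /=; congr sqrt; apply: eq_bigr => i _; ring.
Qed.

Lemma Nrm_zero p : Nrm (@ns_zero (Rp p)) = 0.
Proof.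
have -> : (@ns_zero (Rp p)) = ns_scal 0 ns_zero by apply: Rp_ext => i /=; ring.
rewrite Nrm_scal Rabs_R0; ring.
Qed.

Lemma lim_bound p (u : nat -> Rp p) l M : seq_conv u l -> (forall n, Nrm (u n) <= M) ->
  Nrm l <= INR p * M.
Proof.
move=> /conv_coord H HM; apply: Rle_trans (Nrm_le_N1 _) _.
rewrite -sum_const; apply: sum_le => i.
case: (Rle_or_lt (Rabs (l i)) M) => // hlt; exfalso.
have he : 0 < Rabs (l i) - M by lra.
have [N HN] := proj1 (Un_cv_iff _ _) (H i) _ he.
have h1 := HN N (leqnn N).
have h2 := coord_le (u N) i; have h3 := HM N.
have h4 := Rabs_triang (l i - u N i) (u N i).
rewrite Rabs_minus_sym in h4.
have h5 : Rabs (l i) <= Rabs (u N i - l i) + Rabs (u N i).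
  have E : l i = l i - u N i + u N i by ring.
  by rewrite {1}E.
lra.
Qed.

Lemma Un_cv_cinv c : Un_cv (fun n => c * / (INR n + 1)) 0.
Proof.
have H : Un_cv (fun n => / (INR n + 1)) 0.
  apply/Un_cv_iff => eps he; have [N HN] := inv_small he; exists N => n Hn.
  have hp : 0 < / (INR n + 1) by apply: Rinv_0_lt_compat; have := pos_INR n; lra.
  rewrite Rminus_0_r Rabs_right; [exact: HN| lra].
have := CV_mult (fun _ => c) (fun n => / (INR n + 1)) c 0 _ H.
rewrite Rmult_0_r; apply.
apply/Un_cv_iff => eps he; exists 0%N => n _; rewrite Rminus_diag Rabs_R0; lra.
Qed.

Lemma conv_Nrm0 p (u : nat -> Rp p) : seq_conv u ns_zero -> Un_cv (fun n => Nrm (u n)) 0.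
Proof.
move=> H; apply/Un_cv_iff => eps he; have [N HN] := H eps he; exists N => n Hn.
rewrite Rminus_0_r Rabs_right; last by apply: Rle_ge; apply: Nrm_ge0.
have := HN n Hn; rewrite sub_zero; done.
Qed.

Lemma prod_norm_sub (X Y : NSpace) (a b : prodNS X Y) :
  ns_norm (ns_sub a b) = ns_norm (ns_sub a.1 b.1) + ns_norm (ns_sub a.2 b.2).
Proof. by []. Qed.

Lemma prod_conv (X : NSpace) p (u : nat -> prodNS X (Rp p)) (a : X) (b : Rp p) :
  normed_space X ->
  (seq_conv u (a, b) <-> seq_conv (fun n => (u n).1) a /\ seq_conv (fun n => (u n).2) b).
Proof.
move=> HX; split.
- move=> H; split=> eps he; have [N HN] := H eps he; exists N => n Hn;
  have := HN n Hn; rewrite prod_norm_sub;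
  have := X_norm_ge0 HX (ns_sub (u n).1 a); have := Nrm_ge0 (ns_sub (u n).2 b); rewrite /Nrm /=; lra.
- move=> [H1 H2] eps he.
  have he2 : 0 < eps / 2 by lra.
  have [N1 HN1] := H1 _ he2; have [N2 HN2] := H2 _ he2.
  exists (maxn N1 N2) => n Hn; rewrite prod_norm_sub.
  have := HN1 n (leq_trans (leq_maxl _ _) Hn); have := HN2 n (leq_trans (leq_maxr _ _) Hn); rewrite /=; lra.
Qed.

Lemma Un_cv_const c : Un_cv (fun _ => c) c.
Proof. apply/Un_cv_iff => eps he; exists 0%N => n _; rewrite Rminus_diag Rabs_R0; lra. Qed.

Section Main.
Variables (X : NSpace) (p : nat) (P : Rp p -> Prop) (F : X -> Rp p -> Prop) (x : X) (y : Rp p).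
Hypothesis HX : normed_space X.
Hypothesis HP : good_cone P.
Hypothesis Fxy : F x y.
Variables (l delta : R).
Hypothesis Hl : 0 < l.
Hypothesis Hd : 0 < delta.
Hypothesis Hlip : forall x1 x2 : X, ns_norm (ns_sub x1 x) < delta -> ns_norm (ns_sub x2 x) < delta ->
      forall y1, F x1 y1 -> exists y2, F x2 y2 /\
        ns_norm (ns_sub y1 y2) <= l * ns_norm (ns_sub x1 x2).
Hypothesis HPE : proper_minimal_pts (F x) P y.

Definition TT := contingent_cone (set_plus (F x) P) y.
Definition DD v := Defs.cont_deriv (epi_map F P) x y v.

Lemma P0 : P ns_zero. Proof. by case: HP. Qed.
Lemma Pclseq (u : nat -> Rp p) z : (forall n, P (u n)) -> seq_conv u z -> P z.
Proof. move=> H1 H2; case: HP => _ [H _]; apply: H; exists u; split. exact: H1. exact: H2. Qed.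
Lemma Pscal s a : 0 <= s -> P a -> P (ns_scal s a).
Proof. by case: HP => _ [_ [H _]]; apply: H. Qed.
Lemma Padd a b : P a -> P b -> P (ns_add a b).
Proof. by case: HP => _ [_ [_ [H _]]]; apply: H. Qed.
Lemma Pptd a : P a -> P (ns_opp a) -> a = ns_zero.
Proof. by case: HP => _ [_ [_ [_ [H _]]]]; apply: H. Qed.

Lemma inv_pos n : 0 < / (INR n + 1).
Proof. apply: Rinv_0_lt_compat; have := pos_INR n; lra. Qed.

Lemma inv_le1 n : / (INR n + 1) <= 1.
Proof.
rewrite -Rinv_1; apply: Rinv_le_contravar; [lra| have := pos_INR n; lra].
Qed.

Lemma TT_cone u s : TT u -> 0 < s -> TT (ns_scal s u).
Proof.
move=> [h [vk [[Hh0 Hh] [Hv Hm]]]] hs.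
exists (fun k => h k * / s), (fun k => ns_scal s (vk k)); split; [split|split].
- move=> k; apply: Rmult_lt_0_compat => //; exact: Rinv_0_lt_compat.
- have := CV_mult h (fun _ => / s) 0 (/ s) Hh (Un_cv_const _); rewrite Rmult_0_l; apply.
- exact: conv_scal (Un_cv_const _) Hv.
- move=> k; have -> : ns_add y (ns_scal (h k * / s) (ns_scal s (vk k))) = ns_add y (ns_scal (h k) (vk k)).
    apply: Rp_ext => i /=; field; lra.
  exact: Hm.
Qed.

Lemma TT_closed (us : nat -> Rp p) u : (forall n, TT (us n)) -> seq_conv us u -> TT u.
Proof.
move=> Hn Hc.
have H : forall n, exists hv : R * Rp p, 0 < hv.1 /\ hv.1 < / (INR n + 1) /\
   Nrm (ns_sub hv.2 (us n)) <= 1 * / (INR n + 1) /\ set_plus (F x) P (ns_add y (ns_scal hv.1 hv.2)).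
  move=> n; have [h [vk [[Hh0 Hh] [Hv Hm]]]] := Hn n.
  have hp := inv_pos n.
  have [N1 HN1] := proj1 (Un_cv_iff _ _) Hh _ hp.
  have [N2 HN2] := Hv _ hp.
  exists (h (maxn N1 N2), vk (maxn N1 N2)); split; [exact: Hh0| split; [|split; [|exact: Hm]]].
  - rewrite /=; have := HN1 (maxn N1 N2) (leq_maxl _ _); rewrite Rminus_0_r => h1.
    have := Rle_abs (h (maxn N1 N2)); lra.
  - move: (HN2 _ (leq_maxr N1 N2)); rewrite /Nrm /=; lra.
have [hv Hhv] := choice_fn H.
exists (fun n => (hv n).1), (fun n => (hv n).2); split; [split|split].
- move=> n; by case: (Hhv n).
- apply/Un_cv_iff => eps he; have [N HN] := inv_small he; exists N => n Hn'.
  have [h1 [h2 _]] := Hhv n; have := HN n Hn'; rewrite Rminus_0_r Rabs_right; [lra|lra].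
- have E : seq_conv (fun n => ns_add (ns_sub (hv n).2 (us n)) (us n)) (ns_add ns_zero u).
    apply: conv_add Hc; apply: (@conv_small _ _ (fun n => 1 * / (INR n + 1))).
      move=> n; by case: (Hhv n) => _ [_ [h _]].
    exact: Un_cv_cinv.
  have E2 : ns_add ns_zero u = u by apply: Rp_ext => i /=; ring.
  rewrite E2 in E; apply: conv_ext E => n; apply: Rp_ext => i /=; ring.
- move=> n; by case: (Hhv n) => _ [_ [_ h]].
Qed.


Lemma DD_near v d : DD v d -> exists u, TT u /\ Nrm (ns_sub d u) <= INR p * (l * (ns_norm v + 1)).
Proof.
move=> [h [vk [[Hh0 Hh] [Hv Hm]]]].
have [Hv1 Hv2] := proj1 (prod_conv _ _ _ HX) Hv.
have [K1 HK1] := Hv1 1 Rlt_0_1.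
have hnv := X_norm_ge0 HX v.
have hc : 0 < delta / (ns_norm v + 1) by apply: Rdiv_lt_0_compat; lra.
have [K2 HK2] := proj1 (Un_cv_iff _ _) Hh _ hc.
have Hg : forall k, exists g : Rp p, (maxn K1 K2 <= k)%N -> Nrm g <= l * (ns_norm v + 1) /\
    set_plus (F x) P (ns_add y (ns_scal (h k) (ns_sub (vk k).2 g))).
  move=> k; case: (boolP (maxn K1 K2 <= k)%N) => Hk; last by exists ns_zero.
  have Hk1 : (K1 <= k)%N := leq_trans (leq_maxl _ _) Hk.
  have Hk2 : (K2 <= k)%N := leq_trans (leq_maxr _ _) Hk.
  have hn1 : ns_norm (vk k).1 < ns_norm v + 1.
    have := HK1 k Hk1; have := X_norm_le HX (vk k).1 v; lra.
  have hhk0 := Hh0 k.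
  have hhk : h k < delta / (ns_norm v + 1).
    have := HK2 k Hk2; rewrite Rminus_0_r Rabs_right; lra.
  have hd1 : h k * ns_norm (vk k).1 < delta.
    have -> : delta = (delta / (ns_norm v + 1)) * (ns_norm v + 1) by field; lra.
    have := X_norm_ge0 HX (vk k).1; nra.
  have [f [q [Hf [Hq Heq]]]] := Hm k.
  have [y2 [Hy2 Hny]] := Hlip (x1 := ns_add x (ns_scal (h k) (vk k).1)) (x2 := x)
     (ltac:(rewrite X_sub_xhv // X_normZ // Rabs_right; lra))
     (ltac:(rewrite X_sub_self // X_norm0 //; lra)) Hf.
  rewrite X_sub_xhv // X_normZ // Rabs_right in Hny; last lra.
  exists (ns_scal (/ h k) (ns_sub f y2)) => _; split.
  - rewrite Nrm_scal Rabs_right; last by apply: Rle_ge; apply: Rlt_le; apply: Rinv_0_lt_compat.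
    rewrite /Nrm.
    apply: (@Rle_trans _ (/ h k * (l * (h k * ns_norm (vk k).1)))).
      apply: Rmult_le_compat_l => //; apply: Rlt_le; exact: Rinv_0_lt_compat.
    have -> : / h k * (l * (h k * ns_norm (vk k).1)) = l * ns_norm (vk k).1 by field; lra.
    apply: Rmult_le_compat_l; lra.
  - exists y2, q; split => //; split => //; apply: Rp_ext => i.
    have := f_equal (fun g : Rp p => g i) Heq; rewrite /= => E.
    rewrite Rmult_plus_distr_l -Rplus_assoc E; field; lra.
have [G HG] := choice_fn Hg.
have [psi [g [Hpsi Hgc]]] := @BW_Rp p (fun n => G (n + maxn K1 K2)%N) (l * (ns_norm v + 1))
  (fun n => proj1 (HG _ (leq_addl _ _))).
set K0 := maxn K1 K2 in Hpsi Hgc HG.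
have Hk : forall n, (psi n + K0 < psi n.+1 + K0)%N by move=> n; rewrite ltn_add2r.
exists (ns_sub d g); split.
- exists (fun n => h (psi n + K0)%N), (fun n => ns_sub (vk (psi n + K0)%N).2 (G (psi n + K0)%N)).
  split; [split|split].
  + move=> n; exact: Hh0.
  + exact: (@Un_cv_subseq h 0 (fun n => psi n + K0)%N).
  + apply: conv_sub => //; exact: (@conv_subseq _ (fun n => (vk n).2) d (fun n => psi n + K0)%N).
  + move=> n; exact: (proj2 (HG _ (leq_addl _ _))).
- have -> : ns_sub d (ns_sub d g) = g by apply: Rp_ext => i /=; ring.
  exact: lim_bound Hgc (fun n => proj1 (HG _ (leq_addl _ _))).
Qed.


Lemma DD_closed v (ws : nat -> Rp p) w : (forall n, DD v (ws n)) -> seq_conv ws w -> DD v w.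
Proof.
move=> Hn Hc.
have H : forall n, exists hv : R * (X * Rp p), 0 < hv.1 /\ hv.1 < / (INR n + 1) /\
   ns_norm (ns_sub hv.2.1 v) < / (INR n + 1) /\
   Nrm (ns_sub hv.2.2 (ws n)) <= 1 * / (INR n + 1) /\
   set_plus (F (ns_add x (ns_scal hv.1 hv.2.1))) P (ns_add y (ns_scal hv.1 hv.2.2)).
  move=> n; have [h [vk [[Hh0 Hh] [Hv Hm]]]] := Hn n.
  have [Hv1 Hv2] := proj1 (prod_conv _ _ _ HX) Hv.
  have hp := inv_pos n.
  have [N1 HN1] := proj1 (Un_cv_iff _ _) Hh _ hp.
  have [N2 HN2] := Hv1 _ hp.
  have [N3 HN3] := Hv2 _ hp.
  exists (h (maxn N1 (maxn N2 N3)), vk (maxn N1 (maxn N2 N3))).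
  split; [exact: Hh0| split; [|split; [|split; [|exact: Hm]]]].
  - rewrite /=; have := HN1 _ (leq_maxl N1 (maxn N2 N3)); rewrite Rminus_0_r => h1.
    have := Rle_abs (h (maxn N1 (maxn N2 N3))); lra.
  - exact: HN2 _ (leq_trans (leq_maxl N2 N3) (leq_maxr N1 _)).
  - move: (HN3 _ (leq_trans (leq_maxr N2 N3) (leq_maxr N1 _))); rewrite /Nrm /=; lra.
have [hv Hhv] := choice_fn H.
exists (fun n => (hv n).1), (fun n => (hv n).2); split; [split|split].
- move=> n; by case: (Hhv n).
- apply/Un_cv_iff => eps he; have [N HN] := inv_small he; exists N => n Hn'.
  have [h1 [h2 _]] := Hhv n; have := HN n Hn'; rewrite Rminus_0_r Rabs_right; [lra|lra].
- apply/(prod_conv _ _ _ HX); split.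
  + move=> eps he; have [N HN] := inv_small he; exists N => n Hn'.
    have [_ [_ [h3 _]]] := Hhv n; have := HN n Hn'; lra.
  + have E : seq_conv (fun n => ns_add (ns_sub (hv n).2.2 (ws n)) (ws n)) (ns_add ns_zero w).
      apply: conv_add Hc; apply: (@conv_small _ _ (fun n => 1 * / (INR n + 1))).
        move=> n; by case: (Hhv n) => _ [_ [_ [h _]]].
      exact: Un_cv_cinv.
    have E2 : ns_add ns_zero w = w by apply: Rp_ext => i /=; ring.
    rewrite E2 in E; apply: conv_ext E => n; apply: Rp_ext => i /=; ring.
- move=> n; case: (Hhv n) => _ [_ [_ [_ h]]]; exact: h.
Qed.


Lemma DD_nonempty v : exists w0, DD v w0.
Proof.
case: HP => _ [_ [_ [_ [_ [y0 [r [Hr Hball]]]]]]].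
have hnv := X_norm_ge0 HX v.
pose t := (l * ns_norm v + 1) / r.
have ht : 0 < t by apply: Rdiv_lt_0_compat => //; nra.
have Hb : forall z, Nrm (ns_sub z (ns_scal t y0)) < l * ns_norm v + 1 -> P z.
  move=> z hz.
  have -> : z = ns_scal t (ns_scal (/ t) z) by apply: Rp_ext => i /=; field; lra.
  apply: Pscal; first lra. apply: Hball.
  change (Nrm (ns_sub (ns_scal (/ t) z) y0) < r).
  have -> : ns_sub (ns_scal (/ t) z) y0 = ns_scal (/ t) (ns_sub z (ns_scal t y0)).
    by apply: Rp_ext => i /=; field; lra.
  have hti : 0 < / t by apply: Rinv_0_lt_compat.
  rewrite Nrm_scal Rabs_right; last lra.
  have -> : r = / t * (l * ns_norm v + 1) by rewrite /t; field; (try split); nra.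
  exact: Rmult_lt_compat_l.
pose c := delta / (ns_norm v + 1).
have hc : 0 < c by apply: Rdiv_lt_0_compat; lra.
exists (ns_scal t y0), (fun k => c * / (INR k + 1)), (fun _ => (v, ns_scal t y0)).
split; [split|split].
- move=> k; apply: Rmult_lt_0_compat => //; exact: inv_pos.
- exact: Un_cv_cinv.
- apply/(prod_conv _ _ _ HX); split; last exact: conv_const.
  move=> eps he; exists 0%N => n _; rewrite X_sub_self // X_norm0 //; lra.
- move=> k.
  change (set_plus (F (ns_add x (ns_scal (c * / (INR k + 1)) v))) P
     (ns_add y (ns_scal (c * / (INR k + 1)) (ns_scal t y0)))).
  pose hk := c * / (INR k + 1).
  have hk0 : 0 < hk by apply: Rmult_lt_0_compat => //; exact: inv_pos.
  have hkc : hk <= c.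
    rewrite /hk -{2}(Rmult_1_r c); apply: Rmult_le_compat_l; [lra| exact: inv_le1].
  have hd1 : hk * ns_norm v < delta.
    have : c * ns_norm v < delta.
      rewrite /c; apply: (Rmult_lt_reg_r (ns_norm v + 1)); first lra.
      have -> : delta / (ns_norm v + 1) * ns_norm v * (ns_norm v + 1) = delta * ns_norm v by field; lra.
      nra.
    nra.
  have [y2 [Hy2 Hny]] := Hlip (x1 := x) (x2 := ns_add x (ns_scal hk v))
     (ltac:(rewrite X_sub_self // X_norm0 //; lra))
     (ltac:(rewrite X_sub_xhv // X_normZ // Rabs_right; lra)) Fxy.
  rewrite X_sub_x_xhv // X_normZ // Rabs_Ropp Rabs_right in Hny; last lra.
  exists y2, (ns_scal hk (ns_add (ns_scal t y0) (ns_scal (/ hk) (ns_sub y y2)))).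
  split => //; split.
  + apply: Pscal; first lra. apply: Hb.
    have -> : ns_sub (ns_add (ns_scal t y0) (ns_scal (/ hk) (ns_sub y y2))) (ns_scal t y0)
        = ns_scal (/ hk) (ns_sub y y2) by apply: Rp_ext => i /=; ring.
    have hki : 0 < / hk by apply: Rinv_0_lt_compat.
    rewrite Nrm_scal Rabs_right; last lra.
    apply: (@Rle_lt_trans _ (/ hk * (l * (hk * ns_norm v)))).
      apply: Rmult_le_compat_l; [lra| exact: Hny].
    have -> : / hk * (l * (hk * ns_norm v)) = l * ns_norm v by field; lra.
    lra.
  + apply: Rp_ext => i /=; rewrite -/hk; field; lra.
Qed.


Lemma inv_mono n m : (n <= m)%N -> / (INR m + 1) <= / (INR n + 1).
Proof.
move=> /leP H; apply: Rinv_le_contravar; first (have := pos_INR n; lra).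
have := le_INR _ _ H; lra.
Qed.

Lemma K_bounded v w0 : exists M, forall z, DD v z -> P (ns_sub w0 z) -> Nrm z <= M.
Proof.
apply: NNPP => Hne.
have H : forall n, exists z, DD v z /\ P (ns_sub w0 z) /\ INR n + 1 < Nrm z.
  move=> n; apply: NNPP => Hn; apply: Hne; exists (INR n + 1) => z Dz Pz.
  apply: Rnot_lt_le => hlt; apply: Hn; exists z; split => //; split => //.
have [zs Hzs] := choice_fn H.
pose B := INR p * (l * (ns_norm v + 1)).
have Hu : forall n, exists u, TT u /\ Nrm (ns_sub (zs n) u) <= B.
  move=> n; case: (Hzs n) => Dz _; exact: DD_near Dz.
have [us Hus] := choice_fn Hu.
pose s n := / Nrm (zs n).
have Hs0 : forall n, 0 < s n.
  move=> n; apply: Rinv_0_lt_compat; case: (Hzs n) => _ [_ h]; have := pos_INR n; lra.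
have Hs1 : forall n, s n <= / (INR n + 1).
  move=> n; apply: Rinv_le_contravar; first (have := pos_INR n; lra).
  case: (Hzs n) => _ [_ h]; lra.
have Hsz : forall n, Nrm (ns_scal (s n) (zs n)) = 1.
  move=> n; rewrite Nrm_scal Rabs_right; last (apply: Rle_ge; apply: Rlt_le; exact: Hs0).
  rewrite /s; field; case: (Hzs n) => _ [_ h]; have := pos_INR n; lra.
have [phi [zeta [Hphi Hc]]] := @BW_Rp p (fun n => ns_scal (s n) (zs n)) 1 (fun n => Req_le _ _ (Hsz n)).
have HB : 0 <= B.
  have := pos_INR p; have := X_norm_ge0 HX v; rewrite /B => *; apply: Rmult_le_pos => //; nra.
have Hsmall : seq_conv (fun n => ns_scal (s (phi n)) (ns_sub (zs (phi n)) (us (phi n)))) ns_zero.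
  apply: (@conv_small _ _ (fun n => B * / (INR n + 1))); last exact: Un_cv_cinv.
  move=> n; rewrite Nrm_scal Rabs_right; last (apply: Rle_ge; apply: Rlt_le; exact: Hs0).
  have h1 := proj2 (Hus (phi n)); have h2 := Hs1 (phi n); have h3 := inv_mono (incr_ge Hphi n).
  have h4 := Hs0 (phi n); have h5 := Nrm_ge0 (ns_sub (zs (phi n)) (us (phi n))).
  have h6 := inv_pos n; nra.
have HT : TT zeta.
  apply: (@TT_closed (fun n => ns_scal (s (phi n)) (us (phi n)))).
    move=> n; apply: TT_cone; [exact: (proj1 (Hus (phi n))) | exact: Hs0].
  have E := conv_sub Hc Hsmall.
  have E2 : ns_sub zeta ns_zero = zeta by apply: Rp_ext => i /=; ring.
  rewrite E2 in E; apply: conv_ext E => n; apply: Rp_ext => i /=; ring.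
have HPz : P (ns_opp zeta).
  apply: (@Pclseq (fun n => ns_scal (s (phi n)) (ns_sub w0 (zs (phi n))))).
    move=> n; apply: Pscal; [apply: Rlt_le; exact: Hs0| by case: (Hzs (phi n)) => _ []].
  have Hw : seq_conv (fun n => ns_scal (s (phi n)) w0) ns_zero.
    apply: (@conv_small _ _ (fun n => Nrm w0 * / (INR n + 1))); last exact: Un_cv_cinv.
    move=> n; rewrite Nrm_scal Rabs_right; last (apply: Rle_ge; apply: Rlt_le; exact: Hs0).
    have h2 := Hs1 (phi n); have h3 := inv_mono (incr_ge Hphi n).
    have h4 := Hs0 (phi n); have h5 := Nrm_ge0 w0; nra.
  have E := conv_sub Hw Hc.
  have E2 : ns_sub ns_zero zeta = ns_opp zeta by apply: Rp_ext => i /=; ring.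
  rewrite E2 in E; apply: conv_ext E => n; apply: Rp_ext => i /=; ring.
have Hz0 : zeta = ns_zero by apply: (proj1 (proj2 HPE zeta)); split.
rewrite Hz0 in Hc.
have [N HN] := Hc (1/2) ltac:(lra).
have := HN N (leqnn N); rewrite sub_zero; change (Nrm (ns_scal (s (phi N)) (zs (phi N))) < 1/2 -> False).
rewrite Hsz; lra.
Qed.


Lemma DD_minimal v : exists d, minimal_pts (DD v) P d.
Proof.
have [w0 Hw0] := DD_nonempty v.
have [M HM] := K_bounded v w0.
pose KK z := DD v z /\ P (ns_sub w0 z).
have Hsub0 : forall a : Rp p, ns_sub a a = ns_zero by move=> a; apply: Rp_ext => i /=; ring.
have HKw0 : KK w0 by split => //; rewrite Hsub0; exact: P0.
have HM0 : 0 <= M by have := HM w0 Hw0 HKw0.2; have := Nrm_ge0 w0; lra.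
pose E z r := r = 0 \/ exists z', KK z' /\ P (ns_sub z z') /\ r = Nrm (ns_sub z z').
have Hbnd : forall z, bound (E z).
  move=> z; exists (Kc p * (Nrm z + M)) => r [->|[z' [[Dz' Pz'] [_ ->]]]].
    have := Kc_pos p; have := Nrm_ge0 z; nra.
  have h1 := Nrm_triang z (ns_opp z'); rewrite Nrm_opp in h1.
  have h2 := HM z' Dz' Pz'; have h3 := Kc_pos p.
  apply: Rle_trans h1 _; apply: Rmult_le_compat_l; lra.
have Hne : forall z, exists r, E z r by move=> z; exists 0; left.
pose phiS z := proj1_sig (completeness (E z) (Hbnd z) (Hne z)).
have Hlub : forall z, is_lub (E z) (phiS z) by move=> z; exact: proj2_sig (completeness (E z) (Hbnd z) (Hne z)).
have Hstep : forall nz : nat * Rp p, exists z', KK nz.2 -> KK z' /\ P (ns_sub nz.2 z') /\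
    phiS nz.2 - / (INR nz.1 + 1) < Nrm (ns_sub nz.2 z').
  move=> [n z] /=; case: (classic (KK z)) => Kz; last by exists z.
  apply: NNPP => Hno; have [Hub Hleast] := Hlub z.
  have : phiS z <= phiS z - / (INR n + 1).
    apply: Hleast => r [->|[z' [Kz' [Pz' ->]]]].
      apply: Rnot_lt_le => h; apply: Hno; exists z => _; split => //; split.
        change (P (ns_sub z z)); rewrite Hsub0; exact: P0.
      change (phiS z - / (INR n + 1) < Nrm (ns_sub z z)); rewrite Hsub0 Nrm_zero; lra.
    apply: Rnot_lt_le => h; apply: Hno; exists z' => _; split => //; split => //.
  have := inv_pos n; lra.
have [G HG] := choice_fn Hstep.
pose zs := fix f (n : nat) : Rp p := if n is n'.+1 then G (n', f n') else w0.
have HzK : forall n, KK (zs n).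
  elim=> [|n IH] //=; exact: (proj1 (HG (n, zs n) IH)).
have HzS : forall n, P (ns_sub (zs n) (zs n.+1)) /\
    phiS (zs n) - / (INR n + 1) < Nrm (ns_sub (zs n) (zs n.+1)).
  move=> n; exact: (proj2 (HG (n, zs n) (HzK n))).
have Chain : forall n k, P (ns_sub (zs n) (zs (k + n)%N)).
  move=> n; elim=> [|k IH]; first by rewrite add0n Hsub0; exact: P0.
  rewrite addSn.
  have -> : ns_sub (zs n) (zs (k + n).+1) =
     ns_add (ns_sub (zs n) (zs (k + n)%N)) (ns_sub (zs (k + n)%N) (zs (k + n).+1)).
    by apply: Rp_ext => i /=; ring.
  apply: Padd => //; exact: (HzS _).1.
have Chain' : forall n m, (n <= m)%N -> P (ns_sub (zs n) (zs m)).
  move=> n m /subnK <-; exact: Chain.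
have LB : forall (rho : nat -> nat) b, (forall j, (rho j < rho j.+1)%N) ->
    seq_conv (fun j => zs (rho j)) b -> forall n, P (ns_sub (zs n) b).
  move=> rho b Hr Hb n.
  apply: (@Pclseq (fun j => ns_sub (zs n) (zs (rho (j + n)%N)))).
    move=> j; apply: Chain'; apply: leq_trans (incr_ge Hr _); exact: leq_addl.
  apply: conv_sub; first exact: conv_const.
  apply: (@conv_subseq _ (fun j => zs (rho j)) b (fun j => (j + n)%N)) => //.
have [phi [zstar [Hphi Hc]]] := @BW_Rp p zs M (fun n => HM _ (HzK n).1 (HzK n).2).
have HDz : DD v zstar by apply: (@DD_closed v (fun n => zs (phi n))) => // n; exact: (HzK _).1.
have HPz : P (ns_sub w0 zstar).
  apply: (@Pclseq (fun n => ns_sub w0 (zs (phi n)))); first by move=> n; exact: (HzK _).2.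
  apply: conv_sub => //; exact: conv_const.
have LBz := LB phi zstar Hphi Hc.
exists zstar; split => // z; split; last first.
  move=> ->; split => //; exists ns_zero; split; first exact: P0.
  by apply: Rp_ext => i /=; ring.
move=> [[q [Hq ->]] Hz].
have HKz : KK (ns_sub zstar q).
  split => //.
  have -> : ns_sub w0 (ns_sub zstar q) = ns_add (ns_sub w0 zstar) q by apply: Rp_ext => i /=; ring.
  exact: Padd.
have Lz : forall n, P (ns_sub (zs n) (ns_sub zstar q)).
  move=> n; have -> : ns_sub (zs n) (ns_sub zstar q) = ns_add (ns_sub (zs n) zstar) q.
    by apply: Rp_ext => i /=; ring.
  exact: Padd.
have Hphi_le : forall n, Nrm (ns_sub (zs n) (ns_sub zstar q)) <= phiS (zs n).
  move=> n; apply: (proj1 (Hlub (zs n))); right; exists (ns_sub zstar q); split => //.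
have [psi [b [Hpsi Hb]]] := @BW_Rp p (fun n => zs (phi n).+1) M
   (fun n => HM _ (HzK _).1 (HzK _).2).
have Hrho : forall j, ((phi (psi j)).+1 < (phi (psi j.+1)).+1)%N.
  move=> j; rewrite ltnS; exact: (incr_comp Hphi Hpsi).
have LBb := LB (fun j => (phi (psi j)).+1) b Hrho Hb.
have Hc2 : seq_conv (fun j => zs (phi (psi j))) zstar.
  exact: (@conv_subseq _ (fun n => zs (phi n)) zstar psi).
have Hbz1 : P (ns_sub b zstar).
  apply: (@Pclseq (fun j => ns_sub (zs (phi (psi j)).+1) zstar)); first by move=> j; exact: LBz.
  apply: conv_sub => //; exact: conv_const.
have Hbz2 : P (ns_sub zstar b).
  apply: (@Pclseq (fun j => ns_sub (zs (phi (psi j))) b)); first by move=> j; exact: LBb.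
  apply: conv_sub => //; exact: conv_const.
have Hbz : b = zstar.
  have Hopp : ns_opp (ns_sub zstar b) = ns_sub b zstar by apply: Rp_ext => i /=; ring.
  have h : ns_sub zstar b = ns_zero by apply: Pptd Hbz2 _; rewrite Hopp.
  apply: Rp_ext => i; have := f_equal (fun g : Rp p => g i) h; rewrite /= => e; lra.
rewrite Hbz in Hb.
pose nj j := phi (psi j).
have He : Un_cv (fun j => Nrm (ns_sub (zs (nj j)) (zs (nj j).+1)) + 1 * / (INR (nj j) + 1)) 0.
  rewrite -(Rplus_0_r 0); apply: CV_plus.
    apply: conv_Nrm0; rewrite -(Hsub0 zstar); exact: conv_sub.
  exact: (@Un_cv_subseq (fun n => 1 * / (INR n + 1)) 0 nj (Un_cv_cinv 1) (incr_comp Hphi Hpsi)).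
have Hsm : seq_conv (fun j => ns_sub (zs (nj j)) (ns_sub zstar q)) ns_zero.
  apply: conv_small He => j; have := Hphi_le (nj j); have := (HzS (nj j)).2; lra.
have Ea := conv_add Hsm (conv_const (ns_sub zstar q)).
have E' : seq_conv (fun j => zs (nj j)) (ns_add ns_zero (ns_sub zstar q)).
  apply: conv_ext Ea => j; apply: Rp_ext => i /=; ring.
have Heq := conv_unique Hc2 E'.
apply: Rp_ext => i; have := f_equal (fun g : Rp p => g i) Heq; rewrite /= => e; lra.
Qed.


Lemma compact_bounded (Sc : prodNS X (Rp p) -> Prop) : seq_compact Sc ->
  exists M, forall s, Sc s -> ns_norm s.1 <= M /\ Nrm s.2 <= M.
Proof.
move=> HSc; apply: NNPP => Hne.
have H : forall n, exists s, Sc s /\ ~ (ns_norm s.1 <= INR n /\ Nrm s.2 <= INR n).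
  move=> n; apply: NNPP => Hn; apply: Hne; exists (INR n) => s Hs.
  apply: NNPP => h; apply: Hn; exists s; split => //.
have [u Hu] := choice_fn H.
have [phi [[a b] [Hphi [_ Hc]]]] := HSc u (fun n => (Hu n).1).
have [Hc1 Hc2] := proj1 (prod_conv _ _ _ HX) Hc.
have [N1 HN1] := Hc1 1 Rlt_0_1.
have [N2 HN2] := Hc2 1 Rlt_0_1.
pose B := 1 + ns_norm a + Kc p * (1 + Nrm b).
have [N3 HN3] := INR_unbounded B.
pose n := maxn N1 (maxn N2 N3).
have hK := Kc_pos p; have hb := Nrm_ge0 b; have ha := X_norm_ge0 HX a.
have h1 : ns_norm (u (phi n)).1 <= B.
  have := HN1 n (leq_maxl _ _); have := X_norm_le HX (u (phi n)).1 a; rewrite /B; nra.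
have h2 : Nrm (u (phi n)).2 <= B.
  have E : (u (phi n)).2 = ns_add (ns_sub (u (phi n)).2 b) b by apply: Rp_ext => i /=; ring.
  rewrite E; apply: Rle_trans (Nrm_triang _ _) _.
  have h := HN2 n (leq_trans (leq_maxl _ _) (leq_maxr _ _)).
  change (Nrm (ns_sub (u (phi n)).2 b) < 1) in h.
  rewrite /B; nra.
have h3 : B < INR (phi n).
  apply: Rlt_le_trans HN3 _; apply: le_INR; apply/leP.
  apply: leq_trans (incr_ge Hphi n); exact: leq_trans (leq_maxr _ _) (leq_maxr _ _).
apply: (Hu (phi n)).2; split; lra.
Qed.

Definition UU (Sc : prodNS X (Rp p) -> Prop) := (fun z : Rp p => exists vw : prodNS X (Rp p), Sc vw /\
       exists d, gen_cont_epideriv F P x y (fst vw) d /\ z = ns_add (snd vw) d).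

Lemma A_near (Sc : prodNS X (Rp p) -> Prop) : seq_compact Sc ->
  exists C, forall a, cl_set (UU Sc) a -> exists u, TT u /\ Nrm (ns_sub a u) <= C.
Proof.
move=> HSc; have [M HM] := compact_bounded HSc.
pose B := INR p * (l * (M + 1)).
exists (Kc p * (1 + Kc p * (M + B))) => a [bs [Hbs Hconv]].
have [N HN] := Hconv 1 Rlt_0_1.
have [[v w] [Hvw [d [Hdm Eb]]]] := Hbs N.
have Hdd : DD v d := proj1 Hdm.
have [u [Hu Hdu]] := DD_near Hdd.
exists u; split => //.
have [hv hw] := HM _ Hvw; rewrite /= in hv hw.
have hK := Kc_pos p; have hp := pos_INR p.
have hB : Nrm (ns_sub d u) <= B.
  apply: Rle_trans Hdu _; apply: Rmult_le_compat_l => //; apply: Rmult_le_compat_l; lra.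
have E : ns_sub a u = ns_add (ns_opp (ns_sub (bs N) a)) (ns_add w (ns_sub d u)).
  apply: Rp_ext => i; rewrite Eb /=; ring.
rewrite E; apply: Rle_trans (Nrm_triang _ _) _; rewrite Nrm_opp.
have h1 := HN N (leqnn N); change (Nrm (ns_sub (bs N) a) < 1) in h1.
have h2 := Nrm_triang w (ns_sub d u).
apply: Rmult_le_compat_l; first lra.
have : Kc p * (Nrm w + Nrm (ns_sub d u)) <= Kc p * (M + B).
  apply: Rmult_le_compat_l; lra.
lra.
Qed.

Lemma main_sec (Sc : prodNS X (Rp p) -> Prop) : (exists s0, Sc s0) -> seq_compact Sc ->
  P_bounded P (cl_set (UU Sc)).
Proof.
move=> [[v w] Hs0] HSc z; split.
- move=> [[h [yk [[Hh0 Hh] [Hyk Hc]]]] Hz].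
  have [C HC] := A_near HSc.
  have [us Hus] := choice_fn (fun k => HC _ (Hyk k)).
  apply: (proj1 (proj2 HPE z)); split => //.
  apply: (@TT_closed (fun k => ns_scal (h k) (us k))).
    move=> k; apply: TT_cone => //; exact: (Hus k).1.
  have Hs : seq_conv (fun k => ns_scal (h k) (ns_sub (yk k) (us k))) ns_zero.
    apply: (@conv_small _ _ (fun k => h k * C)).
      move=> k; have := Hh0 k => hk; rewrite Nrm_scal Rabs_right; last lra.
      apply: Rmult_le_compat_l; [lra | exact: (Hus k).2].
    have := CV_mult h (fun _ => C) 0 C Hh (Un_cv_const C); rewrite Rmult_0_l; apply.
  have E := conv_sub Hc Hs.
  rewrite sub_zero in E.
  apply: conv_ext E => k; apply: Rp_ext => i /=; ring.
- move=> ->; split; last first.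
    have -> : ns_opp (@ns_zero (Rp p)) = ns_zero by apply: Rp_ext => i /=; ring.
    exact: P0.
  have [d Hdm] := DD_minimal v.
  pose a := ns_add w d.
  have Ha : cl_set (UU Sc) a.
    exists (fun _ => a); split; last exact: conv_const.
    move=> _; exists (v, w); split => //; exists d; split => //.
  exists (fun k => 1 * / (INR k + 1)), (fun _ => a); split; [split|split].
  + move=> k; have := inv_pos k; lra.
  + exact: Un_cv_cinv.
  + by move=> _.
  + apply: (@conv_small _ _ (fun k => Nrm a * / (INR k + 1))); last exact: Un_cv_cinv.
    move=> k; have := inv_pos k => hk; rewrite Nrm_scal Rabs_right; last lra.
    rewrite Rmult_1_l Rmult_comm; lra.
Qed.

End Main.

Theorem proposition6p7 (X : NSpace) (p : nat) (P : Rp p -> Prop)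
  (F : X -> Rp p -> Prop) (x : X) (y : Rp p) (Sc : prodNS X (Rp p) -> Prop) :
  normed_space X -> good_cone P ->
  F x y -> lipschitz_around F x -> proper_minimal_pts (F x) P y ->
  (exists s0 : prodNS X (Rp p), Sc s0) -> seq_compact Sc ->
  P_bounded P
    (cl_set (fun z : Rp p => exists vw : prodNS X (Rp p), Sc vw /\
       exists d, gen_cont_epideriv F P x y (fst vw) d /\ z = ns_add (snd vw) d)).
Proof.
move=> HX HP Fxy [l [delta [Hl [Hd Hlip]]]] HPE Hne HSc.
exact: (main_sec HX HP Fxy Hl Hd Hlip HPE Hne HSc).
Qed.
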